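(* For every $\gamma>0$ and every dislocation measure $\nu$, there exists a family $(q_n,n\geq1)$ of probability distributions, $q_n$ on $\mathcal{P}_n$, with $q_n((n))<1$ for every $n\geq1$, such that $n^\gamma(1-s_1)\overline{q}_n(\mathrm{d}\mathbf{s})\to(1-s_1)\nu(\mathrm{d}\mathbf{s})$ weakly as finite non-negative measures on $\mathcal{S}^{\downarrow}$ as $n\to\infty$.
   Context: $\mathcal{P}_n$ is the set of partitions of the integer $n$ (non-increasing sequences $\lambda$ of positive integers with sum $n$), and $\mathcal{P}_1=\{(1),\emptyset\}$. $\mathcal{S}^{\downarrow}=\{\mathbf{s}=(s_1,s_2,\dots):s_1\geq s_2\geq\dots\geq0,\sum s_i\leq1\}$ with the $\ell^1$ metric; $\overline{q}_n$ is the measure on $\mathcal{S}^{\downarrow}$ defined by $\overline{q}_n(f)=\sum_{\lambda\in\mathcal{P}_n}q_n(\lambda)f(\lambda/n)$. A dislocation measure is a $\sigma$-finite measure $\nu$ on $\mathcal{S}^{\downarrow}$ with $\nu(\{(1,0,\dots)\})=0$, $\nu(\sum_i s_i<1)=0$ and $\int(1-s_1)\nu(\mathrm{d}\mathbf{s})<\infty$. *)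

(* Defs.v *)
From HB Require Import structures.
From mathcomp Require Import all_boot all_order all_algebra.
From mathcomp Require Import all_classical all_reals all_analysis.
Set Implicit Arguments. Unset Strict Implicit. Unset Printing Implicit Defensive.
Import Order.TTheory GRing.Theory Num.Theory.
Import numFieldNormedType.Exports.
Local Open Scope classical_set_scope.
Local Open Scope ring_scope.

Section Sdown.
Variable R : realType.

Definition is_Sdown (s : nat -> R) : Prop :=
  (forall i, 0 <= s i.+1 <= s i) /\ (forall n, \sum_(i < n) s i <= 1).

Definition l1dist (s t : nat -> R) : \bar R :=
  (\sum_(i <oo) (`|s i - t i|)%:E)%E.

Record Sdown := MkSdown { sdval : nat -> R ; sdvalP : is_Sdown sdval }.

Lemma is_Sdown0 : is_Sdown (fun _ => 0).
Proof. split=> [i|n]; first by rewrite lexx. by rewrite big1 ?ler01. Qed.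

HB.instance Definition _ := gen_eqMixin Sdown.
HB.instance Definition _ := gen_choiceMixin Sdown.
HB.instance Definition _ := isPointed.Build Sdown (MkSdown is_Sdown0).

Definition Sdown_open : set (set Sdown) :=
  [set U | forall x, U x -> exists2 e : R, 0 < e &
     forall y : Sdown, (l1dist (sdval x) (sdval y) < e%:E)%E -> U y].

Definition SdownB : measurableType (sigma_display Sdown_open) :=
  g_sigma_algebraType Sdown_open.


Definition unit_seq : nat -> R := fun i => if i == 0%N then 1 else 0.

Definition dislocation_measure (nu : {measure set SdownB -> \bar R}) : Prop :=
  [/\ sigma_finite setT nu,
      nu [set s : SdownB | sdval s = unit_seq] = 0%E,
      nu [set s : SdownB | (\sum_(i <oo) (sdval s i)%:E < 1%:E)%E] = 0%E
    & (\int[nu]_s (1 - sdval s 0%N)%:E < +oo)%E].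

(* bounded functions on S^down that are continuous for the ell^1 metric;
   values outside S^down are irrelevant *)
Definition bdd_cont_Sdown (f : (nat -> R) -> R) : Prop :=
  (exists M : R, forall s, is_Sdown s -> `|f s| <= M) /\
  (forall s, is_Sdown s -> forall e : R, 0 < e -> exists2 d : R, 0 < d &
     forall t, is_Sdown t -> (l1dist s t < d%:E)%E -> `|f s - f t| < e).

(* lambda / n, as a sequence (padded with zeros) *)
Definition part_scale (n : nat) (l : seq nat) : nat -> R :=
  fun i => (nth 0%N l i)%:R / n%:R.

End Sdown.

Definition partitions (n : nat) : set (seq nat) :=
  [set l | (sorted geq l && all (fun k => 0 < k)%N l && (sumn l == n))
           \/ (n = 1%N /\ l = [::])].

(* Main.v *)
Require Import Defs.
From HB Require Import structures.
From mathcomp Require Import all_boot all_order all_algebra.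
From mathcomp Require Import all_classical all_reals all_analysis.
From mathcomp Require Import measurable_realfun.
From mathcomp Require Import ring lra.
Set Implicit Arguments. Unset Strict Implicit. Unset Printing Implicit Defensive.
Import Order.TTheory GRing.Theory Num.Theory.
Import numFieldNormedType.Exports.
Local Open Scope classical_set_scope.
Local Open Scope ring_scope.

Section Comb.
Local Open Scope nat_scope.

Definition posf (a : seq nat) := [seq x <- a | (0 < x)%N].
Definition Phi (n : nat) (a : seq nat) := posf a ++ nseq (n - sumn (posf a)) 1%N.

Lemma path_nseq1 y k : (1 <= y)%N -> path geq y (nseq k 1%N).
Proof. by elim: k y => //= k IH y Hy; rewrite Hy IH. Qed.

Lemma sorted_cat_ones fa k : sorted geq fa -> all (fun x => 0 < x)%N fa ->
  sorted geq (fa ++ nseq k 1%N).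
Proof.
case: fa => [|x fa] /=; first by case: k => //= k; rewrite path_nseq1.
move=> Hp /andP[Hx Ha]; rewrite cat_path Hp /= path_nseq1 //.
elim: fa x Hx Ha {Hp} => //= y fa IH x _ /andP[Hy Ha]; exact: IH.
Qed.

Lemma sumn_posf a : sumn (posf a) = sumn a.
Proof. by elim: a => //= x a IH; case: x => //= x; rewrite IH. Qed.

Lemma sorted_posf a : sorted geq a -> sorted geq (posf a).
Proof. apply: sorted_filter => x y z /= h1 h2; exact: leq_trans h2 h1. Qed.

Lemma Phi_part n a : sorted geq a -> (sumn a <= n)%N ->
  [&& sorted geq (Phi n a), all (fun k => 0 < k)%N (Phi n a) & sumn (Phi n a) == n].
Proof.
move=> Hs Hn; apply/and3P; split.
- apply: sorted_cat_ones; first exact: sorted_posf.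
  by apply/allP => x; rewrite mem_filter => /andP[].
- rewrite all_cat; apply/andP; split; first by apply/allP => x; rewrite mem_filter => /andP[].
  by apply/allP => x /nseqP[->].
- rewrite /Phi sumn_cat sumn_posf.
  have -> : forall k, sumn (nseq k 1%N) = k by elim => //= k ->; rewrite add1n.
  by rewrite subnKC.
Qed.

Lemma nth_sorted_le (l : seq nat) i j : sorted geq l -> (i <= j)%N -> (nth 0 l j <= nth 0 l i)%N.
Proof.
elim: l i j => [|x l IH] i j /=; first by rewrite !nth_nil.
move=> Hs Hij.
have Hs' : sorted geq l by move: Hs; case: l {IH} => //= y l /andP[].
case: i j Hij => [|i] [|j] //= Hij.
- case: j {Hij} => [|j]; first by move: Hs; case: l {IH Hs'} => //= y l /andP[].
  apply: leq_trans (IH 0%N j.+1 Hs' isT) _.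
  by move: Hs; case: l {IH Hs'} => //= y l /andP[].
- exact: IH.
Qed.

Lemma nth_posf a i : sorted geq a -> (0 < nth 0 a i)%N -> nth 0 (posf a) i = nth 0 a i.
Proof.
elim: a i => [|x a IH] i //= Hs.
have Hs' : sorted geq a by move: Hs; case: a {IH} => //= y a /andP[].
move=> Hi.
have Hx : (0 < x)%N.
  by apply: leq_trans Hi _; exact: (@nth_sorted_le (x :: a) 0 i Hs (leq0n i)).
rewrite /posf /= Hx; case: i Hi => [|i] //= Hi.
exact: IH.
Qed.

Lemma size_posf a i : sorted geq a -> nth 0 a i = 0%N -> (size (posf a) <= i)%N.
Proof.
elim: a i => [|x a IH] i //= Hs.
have Hs' : sorted geq a by move: Hs; case: a {IH} => //= y a /andP[].
case: i => [|i] /= Hi.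
- have Ha : all (fun y => y <= x)%N a.
    by move: Hs; rewrite path_sortedE; [case/andP | move=> p q r /= h1 h2; exact: leq_trans h2 h1].
  rewrite /posf /= Hi /=; move: Ha; rewrite Hi {Hs Hs' IH}.
  by elim: a => //= y a IH /andP[Hy /IH]; rewrite leqn0 in Hy; rewrite (eqP Hy).
- rewrite /posf /=; case: ifP => _ /=; first by rewrite ltnS; exact: IH.
  exact: leq_trans (IH i Hs' Hi) _.
Qed.

Lemma nth_Phi n a i : sorted geq a ->
  ((0 < nth 0 a i)%N /\ nth 0 (Phi n a) i = nth 0 a i) \/
  (nth 0 a i = 0%N /\ (nth 0 (Phi n a) i <= 1)%N).
Proof.
move=> Hs; case: (posnP (nth 0 a i)) => Hi.
- right; split => //; rewrite /Phi nth_cat ltnNge size_posf //=.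
  by rewrite nth_nseq; case: ifP.
- left; split => //; rewrite /Phi nth_cat nth_posf //.
  case: ltnP => // Hle; have := nth_posf Hs Hi.
  by rewrite nth_default // => H; move: Hi; rewrite -H.
Qed.

Lemma sum_nth_le (l : seq nat) M : (\sum_(i < M) nth 0 l i <= sumn l)%N.
Proof.
elim: l M => [|x l IH] M /=; first by rewrite big1 // => i _; rewrite nth_nil.
case: M => [|M]; first by rewrite big_ord0.
rewrite big_ord_recl /=; rewrite leq_add2l.
have -> : (\sum_(i < M) nth 0 (x :: l) (bump 0 i) = \sum_(i < M) nth 0 l i)%N by [].
exact: IH.
Qed.

Lemma posf_mkseq l m : all (fun k => 0 < k) l -> size l <= m ->
  posf (map (nth 0 l) (iota 0 m)) = l.
Proof.
elim: l m => [|x l IH] m /=.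
  move=> _ _; rewrite /posf; elim: (iota 0 m) => //= j r IHr.
  by rewrite nth_nil.
move=> /andP[Hx Ha]; case: m => [|m] //=; rewrite ltnS => Hm.
rewrite /posf /= Hx; congr cons.
have -> : iota 1 m = map (addn 1) (iota 0 m) by rewrite -iotaDl.
rewrite -map_comp -[X in _ = X](IH m Ha Hm) -/(posf _); congr posf; apply: eq_map => j /=.
Qed.

Lemma nth_le_sumn (l : seq nat) i : nth 0 l i <= sumn l.
Proof.
elim: l i => [|x l IH] i /=; first by rewrite nth_nil.
by case: i => [|i] /=; [exact: leq_addr | exact: leq_trans (IH i) (leq_addl _ _)].
Qed.

Lemma size_le_sumn (l : seq nat) : all (fun k => 0 < k) l -> size l <= sumn l.
Proof. by elim: l => //= x l IH /andP[Hx /IH]; rewrite -add1n; apply: leq_add. Qed.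

Lemma sum_pick_nat (T : eqType) (r : seq T) x (c : T -> nat) : x \in r -> uniq r ->
  \sum_(l <- r) (x == l) * c l = c x.
Proof.
move=> Hx Hu; rewrite (bigD1_seq x) //= eqxx mul1n big1 ?addn0 // => l.
by rewrite eq_sym => /negbTE ->.
Qed.

End Comb.

Section M.
Variable R : realType.
Local Notation T := (SdownB R).

Lemma sd_ge0 (s : Sdown R) i : 0 <= sdval s i.
Proof.
have [Hm _] := sdvalP s; case: i => [|i]; last by case/andP: (Hm i).
by case/andP: (Hm 0%N) => H1 H2; exact: le_trans H1 H2.
Qed.

Lemma sd_sum_le1 (s : Sdown R) N : \sum_(i < N) sdval s i <= 1.
Proof. by have [_ Hs] := sdvalP s. Qed.

Lemma sd_le1 (s : Sdown R) i : sdval s i <= 1.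
Proof.
have := sd_sum_le1 s i.+1; rewrite big_ord_recr /=; apply: le_trans.
by rewrite lerDr sumr_ge0 // => j _; exact: sd_ge0.
Qed.

Lemma term_le_l1 (x y : nat -> R) i : ((`|x i - y i|)%:E <= l1dist x y)%E.
Proof.
rewrite /l1dist; apply: le_trans (nneseries_lim_ge i.+1 _) => //.
by rewrite big_nat_recr //= leeDr // sume_ge0.
Qed.

Definition lip_open (F : T -> R) := forall x e, 0 < e -> exists2 d : R, 0 < d &
  forall y : T, (l1dist (sdval x) (sdval y) < d%:E)%E -> `|F x - F y| < e.

Lemma open_meas (U : set T) : Sdown_open U -> measurable U.
Proof. move=> HU; exact: sub_sigma_algebra. Qed.

Lemma lip_meas (F : T -> R) : lip_open F -> measurable_fun setT F.
Proof.
move=> HF; apply: (measurability _ (RGenOInfty.measurableE R)) => //.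
move=> /= _ [_ [a ->] <-]; rewrite setTI preimage_itvoy.
apply: open_meas => x /= ax.
have [d d0 Hd] := HF x (F x - a) (ltac:(by rewrite subr_gt0)).
exists d => // y /Hd H; move: H; rewrite ltr_norml => /andP[_].
move=> H; lra.
Qed.

Lemma coord_lip i : lip_open (fun s => sdval s i).
Proof.
move=> x e e0; exists e => // y H.
by rewrite -lte_fin; apply: le_lt_trans H; exact: term_le_l1.
Qed.

Lemma coord_meas i : measurable_fun setT (fun s : T => sdval s i).
Proof. exact: lip_meas (@coord_lip i). Qed.


Lemma sd_mono (s : Sdown R) i j : (i <= j)%N -> sdval s j <= sdval s i.
Proof.
have [Hm _] := sdvalP s; elim: j => [|j IH]; first by rewrite leqn0 => /eqP->.
rewrite leq_eqVlt => /orP[/eqP->//|]; rewrite ltnS => /IH; apply: le_trans.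
by case/andP: (Hm j).
Qed.

Lemma sd_le_inv (s : Sdown R) i : sdval s i <= (i.+1)%:R^-1.
Proof.
rewrite -[X in _ <= X]mul1r ler_pdivlMr // mulrC.
apply: le_trans (sd_sum_le1 s i.+1).
have : \sum_(j < i.+1) sdval s i <= \sum_(j < i.+1) sdval s j.
  by apply: ler_sum => j _; rewrite sd_mono // -ltnS.
rewrite sumr_const card_ord => H; apply: le_trans H.
by rewrite mulr_natl.
Qed.

Definition bseq n (s : Sdown R) := [seq Num.truncn (n%:R * sdval s i) | i <- iota 0 n].
Definition phi n (s : Sdown R) := Phi n (bseq n s).

Lemma bseq_sorted n s : sorted geq (bseq n s).
Proof.
apply: (homo_sorted (e := leq)); last exact: iota_sorted.
move=> i j Hij /=; apply: le_truncn; apply: ler_wpM2l => //; exact: sd_mono.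
Qed.

Lemma nth_bseq n s i : nth 0%N (bseq n s) i = if (i < n)%N then Num.truncn (n%:R * sdval s i) else 0%N.
Proof.
case: ltnP => Hi; first by rewrite (nth_map 0%N) ?size_iota // nth_iota.
by rewrite nth_default // size_map size_iota.
Qed.

Lemma bseq_sum n s : (sumn (bseq n s) <= n)%N.
Proof.
rewrite -(ler_nat R) /bseq sumnE big_map natr_sum.
apply: le_trans (_ : \sum_(i <- iota 0 n) n%:R * sdval s i <= _).
  by apply: ler_sum => i _; rewrite truncn_le mulr_ge0 // sd_ge0.
rewrite -mulr_sumr -[X in _ <= X]mulr1 ler_wpM2l //.
have -> : iota 0 n = index_iota 0 n by rewrite /index_iota subn0.
rewrite big_mkord; exact: sd_sum_le1.
Qed.

Lemma phi_part n s : (1 <= n)%N -> partitions n (phi n s).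
Proof.
move=> _; left; have /and3P[-> -> ->] // := Phi_part (bseq_sorted n s) (bseq_sum n s).
Qed.


Lemma ps_ge0 n l i : 0 <= part_scale R n l i.
Proof. by rewrite /part_scale divr_ge0. Qed.

Lemma ps_Sdown n l : sorted geq l -> (sumn l <= n)%N -> (0 < n)%N -> is_Sdown (part_scale R n l).
Proof.
move=> Hs Hsum Hn; split => [i|N]; first rewrite ps_ge0 /=.
  by rewrite /part_scale ler_wpM2r // ?invr_ge0 // ler_nat nth_sorted_le.
rewrite /part_scale -mulr_suml -natr_sum ler_pdivrMr ?ltr0n // mul1r ler_nat.
exact: leq_trans (sum_nth_le _ _) Hsum.
Qed.

Lemma phi_close n (s : Sdown R) i : (0 < n)%N ->
  `|sdval s i - part_scale R n (phi n s) i| <= n%:R^-1 /\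
  (part_scale R n (phi n s) i <= sdval s i \/ part_scale R n (phi n s) i <= n%:R^-1).
Proof.
move=> Hn; have Hn' : 0 < n%:R :> R by rewrite ltr0n.
have Hs0 := sd_ge0 s i.
rewrite /part_scale /phi; case: (nth_Phi n i (bseq_sorted n s)) => [[Hp ->]|[H0 Hle]].
- move: Hp; rewrite !nth_bseq; case: (ltnP i n) => Hi //= _.
  have /andP[H1 H2] := truncn_itv (mulr_ge0 (ler0n R n) Hs0).
  set b := Num.truncn _ in H1 H2 *.
  have E1 : b%:R / n%:R <= sdval s i by rewrite ler_pdivrMr // mulrC.
  have E2 : sdval s i - b%:R / n%:R <= n%:R^-1.
    rewrite lerBlDl; have -> : b%:R / n%:R + n%:R^-1 = (b.+1)%:R / n%:R :> R.
      by rewrite -natr1 mulrDl mul1r.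
    by rewrite ler_pdivlMr // mulrC; exact: ltW.
  split; last by left.
  by rewrite ger0_norm ?subr_ge0.
- have Es : sdval s i <= n%:R^-1.
    move: H0; rewrite nth_bseq; case: (ltnP i n) => Hi /=.
      move=> H; have /andP[_ H2] := truncn_itv (mulr_ge0 (ler0n R n) Hs0).
      rewrite H in H2.
      by rewrite -[X in _ <= X]mul1r ler_pdivlMr // mulrC ltW.
    move=> _; apply: le_trans (sd_le_inv s i) _.
    by rewrite lef_pV2 ?posrE ?ltr0n // ler_nat; exact: leqW.
  have Et : (nth 0%N (Phi n (bseq n s)) i)%:R / n%:R <= n%:R^-1 :> R.
    by rewrite ler_pdivrMr // mulVf ?gt_eqF // lern1.
  have Et0 : 0 <= (nth 0%N (Phi n (bseq n s)) i)%:R / n%:R :> R by rewrite divr_ge0.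
  split; last by right.
  rewrite ler_norml; apply/andP; split; lra.
Qed.


Lemma fiber_fun (C : countType) (h : T -> C) (Hh : forall c, measurable [set s | h s = c])
  (G : C -> R) : measurable_fun setT (fun s => G (h s)).
Proof.
move=> _ Y _; rewrite setTI.
have -> : (fun s => G (h s)) @^-1` Y = \bigcup_(c : C) [set s | h s = c /\ Y (G c)].
  apply/seteqP; split => [s /= HY|s [c _ /= [<- //]]].
  by exists (h s).
apply: countable_bigcupT_measurable; first exact: countableP.
move=> c; case: (pselect (Y (G c))) => HY.
  by rewrite (_ : [set s | _] = [set s | h s = c]) //; apply/seteqP; split => s /= => [[]|] //.
by rewrite (_ : [set s | _] = set0) //; apply/seteqP; split => s /= => [[]|] //.
Qed.

Lemma fiber_comp (C : countType) (C' : Type) (h : T -> C) (Hh : forall c, measurable [set s | h s = c])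
  (g : C -> C') (c' : C') : measurable [set s | g (h s) = c'].
Proof.
have -> : [set s | g (h s) = c'] = \bigcup_(c : C) [set s | h s = c /\ g c = c'].
  apply/seteqP; split => [s /= HY|s [c _ /= [<- //]]].
  by exists (h s).
apply: countable_bigcupT_measurable; first exact: countableP.
move=> c; case: (pselect (g c = c')) => HY.
  by rewrite (_ : [set s | _] = [set s | h s = c]) //; apply/seteqP; split => s /= => [[]|] //.
by rewrite (_ : [set s | _] = set0) //; apply/seteqP; split => s /= => [[]|] //.
Qed.

Lemma trunc_fiber n i k : measurable [set s : T | Num.truncn (n%:R * sdval s i) = k].
Proof.
have mx : measurable_fun setT (fun s : T => n%:R * sdval s i).
  exact: measurableT_comp (coord_meas i).
rewrite (_ : [set s | _] = setT `&` (fun s : T => n%:R * sdval s i) @^-1` `[k%:R, k.+1%:R[).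
  exact: mx measurableT _ (measurable_itv _).
apply/seteqP; split => s /=.
  move=> <-; split => //; rewrite in_itv /=; apply: truncn_itv.
  by rewrite mulr_ge0 // sd_ge0.
move=> [_]; rewrite in_itv /= => H; apply/eqP; rewrite truncn_eq //.
by rewrite mulr_ge0 // sd_ge0.
Qed.

Lemma bseq_fiber n b : measurable [set s : T | bseq n s = b].
Proof.
case: (eqVneq (size b) n) => Hsz; last first.
  rewrite (_ : [set s | _] = set0) //; apply/seteqP; split => s //= H.
  by move: Hsz; rewrite -H size_map size_iota eqxx.
rewrite (_ : [set s | _] = \bigcap_(i in [set i | (i < n)%N])
   [set s : T | Num.truncn (n%:R * sdval s i) = nth 0%N b i]).
  by apply: bigcap_measurableType => i _; exact: trunc_fiber.
apply/seteqP; split => s /=.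
  by move=> <- i /= Hi; rewrite nth_bseq Hi.
move=> H; apply: (@eq_from_nth _ 0%N); first by rewrite size_map size_iota Hsz.
move=> i; rewrite size_map size_iota => Hi; rewrite nth_bseq Hi; exact: H.
Qed.

Lemma phi_fiber n l : measurable [set s : T | phi n s = l].
Proof. exact: (fiber_comp (@bseq_fiber n) (Phi n)). Qed.

Lemma w_lip : lip_open (fun s => 1 - sdval s 0%N).
Proof.
move=> x e e0; have [d d0 Hd] := coord_lip 0%N x e0; exists d => // y /Hd H.
rewrite (_ : (1 - sdval x 0%N) - (1 - sdval y 0%N) = -(sdval x 0%N - sdval y 0%N)).
  by rewrite normrN.
ring.
Qed.

Lemma w_meas : measurable_fun setT (fun s : T => 1 - sdval s 0%N).
Proof. exact: lip_meas w_lip. Qed.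

Lemma wG_meas n (G : seq nat -> R) :
  measurable_fun setT (fun s : T => ((1 - sdval s 0%N) * G (phi n s))%:E).
Proof.
apply/measurable_EFinP; apply: measurable_funM; first exact: w_meas.
exact: (fiber_fun (@phi_fiber n)).
Qed.

Lemma sum_lt1_open : Sdown_open [set s : Sdown R | (\sum_(i <oo) (sdval s i)%:E < 1%:E)%E].
Proof.
move=> x /= Hx.
have H0 : (0 <= \sum_(i <oo) (sdval x i)%:E)%E by apply: nneseries_ge0 => i _ _; rewrite lee_fin sd_ge0.
have Hfin : (\sum_(i <oo) (sdval x i)%:E)%E \is a fin_num.
  by rewrite ge0_fin_numE // (lt_le_trans Hx) // leey.
set r := fine (\sum_(i <oo) (sdval x i)%:E)%E.
have Er : (\sum_(i <oo) (sdval x i)%:E)%E = r%:E by rewrite fineK.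
rewrite Er lte_fin in Hx.
exists (1 - r); first by rewrite subr_gt0.
move=> y Hy; rewrite /=.
apply: (@le_lt_trans _ _ (\sum_(i <oo) ((sdval x i)%:E + (`|sdval x i - sdval y i|)%:E))%E).
  apply: lee_nneseries => [i _ _|i _]; first by rewrite lee_fin sd_ge0.
  rewrite -EFinD lee_fin; have := ler_norm (sdval y i - sdval x i).
  rewrite -normrN opprB => H; lra.
rewrite nneseriesD; [|by move=> i _ _; rewrite lee_fin sd_ge0|by move=> i _ _; rewrite lee_fin normr_ge0].
  rewrite Er; apply: (@lt_le_trans _ _ (r%:E + (1 - r)%:E)%E).
    by rewrite lteD2lE //.
  by rewrite -EFinD addrC subrK.
Qed.


Definition enc n (g : {ffun 'I_n.+1 -> 'I_n.+1}) : seq nat := posf [seq val (g i) | i <- enum 'I_n.+1].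

Lemma part_finite n : finite_set (partitions n).
Proof.
apply: (sub_finite_set (B := @enc n @` setT)); last exact: finite_image finite_finset.
move=> l Hl.
have [Hpos Hsum] : all (fun k => 0 < k)%N l /\ (sumn l <= n)%N.
  by case: Hl => [/andP[/andP[_ ->] /eqP ->]|[-> ->]].
exists (finfun (fun i : 'I_n.+1 => (inord (nth 0%N l i) : 'I_n.+1))) => //.
rewrite /enc; have -> : [seq val ((finfun (fun i : 'I_n.+1 => (inord (nth 0%N l i) : 'I_n.+1))) i) | i <- enum 'I_n.+1]
    = map (nth 0%N l) (map val (enum 'I_n.+1)).
  rewrite -map_comp; apply: eq_map => i /=; rewrite ffunE inordK //.
  by rewrite ltnS (leq_trans (nth_le_sumn _ _) Hsum).
rewrite val_enum_ord posf_mkseq //.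
by apply: leq_trans (size_le_sumn Hpos) _; apply: leq_trans Hsum _.
Qed.


Lemma w_ge0 (s : Sdown R) : 0 <= 1 - sdval s 0%N.
Proof. by rewrite subr_ge0 sd_le1. Qed.

Lemma sum_pick (r : seq (seq nat)) x (c : seq nat -> R) : x \in r -> uniq r ->
  \sum_(l <- r) (x == l)%:R * c l = c x.
Proof.
move=> Hx Hu; rewrite (bigD1_seq x) //= eqxx mul1r big1 ?addr0 // => l.
by rewrite eq_sym => /negbTE ->; rewrite mul0r.
Qed.

Definition Lp n : seq (seq nat) := finmap.enum_fset (fset_set (partitions n)).

Lemma Lp_uniq n : uniq (Lp n).
Proof. exact: finmap.fset_uniq. Qed.

Lemma Lp_mem n l : (l \in Lp n) = `[< partitions n l >].
Proof. rewrite /Lp in_fset_set; last exact: part_finite. by apply/idP/asboolP => [/set_mem|/mem_set]. Qed.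

Lemma phi_in n s : (1 <= n)%N -> phi n s \in Lp n.
Proof. by move=> Hn; rewrite Lp_mem; apply/asboolP; exact: phi_part. Qed.

Variable nu : {measure set T -> \bar R}.
Hypothesis hint : (\int[nu]_s (1 - sdval s 0%N)%:E < +oo)%E.

Lemma w_int : nu.-integrable setT (fun s => (1 - sdval s 0%N)%:E).
Proof.
apply/integrableP; split; first by apply/measurable_EFinP; exact: w_meas.
under eq_integral do rewrite abse_EFin ger0_norm ?w_ge0 //.
exact: hint.
Qed.

Lemma wG_int n (G : seq nat -> R) B : (forall l, `|G l| <= B) ->
  nu.-integrable setT (fun s : T => ((1 - sdval s 0%N) * G (phi n s))%:E).
Proof.
move=> HG; apply: (le_integrable measurableT (wG_meas n G) _ (integrableZl measurableT B w_int)) => //.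
move=> s _; rewrite -EFinM !abse_EFin lee_fin !normrM mulrC ler_wpM2r //.
exact: le_trans (HG _) (ler_norm _).
Qed.

Definition W n l := fine (\int[nu]_s ((1 - sdval s 0%N) * (phi n s == l)%:R)%:E)%E.

Lemma KEY n (c : seq nat -> R) : (1 <= n)%N ->
  (\sum_(l <- Lp n) c l * W n l)%:E = (\int[nu]_s ((1 - sdval s 0%N) * c (phi n s))%:E)%E.
Proof.
move=> Hn.
have int_l l : nu.-integrable setT
    (fun s : T => ((1 - sdval s 0%N) * ((fun k => (k == l)%:R * c l) (phi n s)))%:E).
  apply: (@wG_int n (fun k => (k == l)%:R * c l) `|c l|) => k; rewrite normrM; case: (k == l) => /=.
    by rewrite normr1 mul1r.
  by rewrite normr0 mul0r.
have int1 l : nu.-integrable setT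
    (fun s : T => ((1 - sdval s 0%N) * ((fun k => (k == l)%:R) (phi n s)))%:E).
  apply: (@wG_int n (fun k => (k == l)%:R) 1) => k; case: (k == l) => /=.
    by rewrite normr1.
  by rewrite normr0.
transitivity (\int[nu]_s (\sum_(l <- Lp n)
    ((1 - sdval s 0%N) * ((phi n s == l)%:R * c l))%:E))%E; last first.
  apply: eq_integral => s _; rewrite sumEFin -mulr_sumr sum_pick //.
    exact: phi_in.
  exact: Lp_uniq.
rewrite integral_sum //; rewrite -sumEFin; apply: eq_bigr => l _.
transitivity (\int[nu]_s ((c l)%:E * ((1 - sdval s 0%N) * (phi n s == l)%:R)%:E))%E; last first.
  by apply: eq_integral => s _; rewrite -EFinM; congr EFin; ring.
rewrite integralZl //; rewrite /W EFinM fineK //.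
exact: integrable_fin_num.
Qed.


Lemma nat_sum_le1 (s : nat -> R) : is_Sdown s -> forall M, \sum_(0 <= i < M) s i <= 1.
Proof. by move=> [_ H] M; rewrite big_mkord. Qed.

Lemma phi_Sdown n (s : Sdown R) : (0 < n)%N -> is_Sdown (part_scale R n (phi n s)).
Proof.
move=> Hn; have /and3P[H1 _ /eqP H3] := Phi_part (bseq_sorted n s) (bseq_sum n s).
by apply: ps_Sdown => //; rewrite /phi H3.
Qed.

Lemma l1_bound (s : Sdown R) n N eta : (0 < n)%N ->
  1 - eta < \sum_(0 <= i < N) sdval s i ->
  (l1dist (sdval s) (part_scale R n (phi n s)) <= (2 * (N%:R / n%:R) + 2 * eta)%:E)%E.
Proof.
move=> Hn HN; set t := part_scale R n (phi n s).
have Ht : is_Sdown t by exact: phi_Sdown.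
have Hc i : `|sdval s i - t i| <= n%:R^-1 by case: (phi_close s i Hn).
apply: lime_le; first by apply: is_cvg_nneseries => i _ _; rewrite lee_fin normr_ge0.
apply: nearW => M; rewrite sumEFin lee_fin.
set M' := maxn M N.
apply: (@le_trans _ _ (\sum_(0 <= i < M') `|sdval s i - t i|)).
  rewrite (big_cat_nat (leq0n M) (leq_maxl M N)) /= lerDl.
  by apply: sumr_ge0 => i _.
rewrite (big_cat_nat (leq0n N) (leq_maxr M N)) /=.
have A1 : \sum_(0 <= i < N) `|sdval s i - t i| <= N%:R / n%:R.
  apply: le_trans (_ : \sum_(0 <= i < N) n%:R^-1 <= _).
    by apply: ler_sum => i _.
  by rewrite sumr_const_nat subn0 -(mulr_natl (n%:R^-1) N).
have A2 : \sum_(N <= i < M') `|sdval s i - t i| <=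
    \sum_(N <= i < M') sdval s i + \sum_(N <= i < M') t i.
  rewrite -big_split /=; apply: ler_sum => i _.
  apply: le_trans (ler_normB _ _) _.
  by rewrite !ger0_norm ?sd_ge0 // ps_ge0.
have S1 : \sum_(0 <= i < M') sdval s i =
    \sum_(0 <= i < N) sdval s i + \sum_(N <= i < M') sdval s i.
  by rewrite (big_cat_nat (leq0n N) (leq_maxr M N)).
have T1 : \sum_(0 <= i < M') t i =
    \sum_(0 <= i < N) t i + \sum_(N <= i < M') t i.
  by rewrite (big_cat_nat (leq0n N) (leq_maxr M N)).
have SM := nat_sum_le1 (sdvalP s) M'.
have TM := nat_sum_le1 Ht M'.
have TN : \sum_(0 <= i < N) sdval s i - \sum_(0 <= i < N) t i <= N%:R / n%:R.
  apply: le_trans A1; rewrite -sumrB; apply: ler_sum => i _; exact: ler_norm.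
lra.
Qed.

Lemma partial_gt (s : Sdown R) eta : 0 < eta ->
  ~ (\sum_(i <oo) (sdval s i)%:E < 1%:E)%E ->
  exists N, 1 - eta < \sum_(0 <= i < N) sdval s i.
Proof.
move=> eta0 Hs; apply: contrapT => HN; apply: Hs.
apply: (@le_lt_trans _ _ (1 - eta)%:E); last by rewrite lte_fin; lra.
apply: lime_le; first by apply: is_cvg_nneseries => i _ _; rewrite lee_fin sd_ge0.
apply: nearW => M; rewrite sumEFin lee_fin.
by rewrite leNgt; apply/negP => H; apply: HN; exists M.
Qed.

Lemma pw_conv (f : (nat -> R) -> R) (Hf : bdd_cont_Sdown f) (eps : nat -> R)
  (Heps : forall a, 0 < a -> \forall n \near \oo, eps n <= a) (s : Sdown R)
  (Hs : ~ (\sum_(i <oo) (sdval s i)%:E < 1%:E)%E) :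
  (fun n => (1 - sdval s 0%N) * (if eps n <= 1 - part_scale R n (phi n s) 0%N
       then f (part_scale R n (phi n s)) else 0)) @ \oo --> (1 - sdval s 0%N) * f (sdval s).
Proof.
apply/cvgrPdist_lt => e e0.
case: (eqVneq (sdval s 0%N) 1) => Hs0.
  by rewrite Hs0 subrr; near=> n; rewrite !mul0r subrr normr0.
have w0 : 0 < 1 - sdval s 0%N by rewrite subr_gt0 lt_neqAle Hs0 sd_le1.
have [_ Hcont] := Hf; have [d d0 Hd] := Hcont (sdval s) (sdvalP s) e e0.
have [N HN] := partial_gt (ltac:(by rewrite divr_gt0) : 0 < d / 8) Hs.
near=> n.
have Hn2 : (2 <= n)%N by near: n; exists 2%N.
have Hn : (0 < n)%N by apply: leq_trans Hn2.
have Hn' : 0 < n%:R :> R by rewrite ltr0n.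
have He1 : eps n <= 1 - sdval s 0%N by near: n; exact: Heps.
have He2 : eps n <= 2^-1 by near: n; apply: Heps; rewrite invr_gt0.
have HNn : N%:R / n%:R <= d / 8.
  near: n; exists (Num.truncn (8 * N%:R / d)).+1 => // k /= Hk.
  have Hk' : 0 < k%:R :> R by rewrite ltr0n (leq_trans _ Hk).
  have Hk2 : 8 * N%:R / d < k%:R by apply: lt_le_trans (truncnS_gt _) _; rewrite ler_nat.
  rewrite ltr_pdivrMr // in Hk2.
  rewrite ler_pdivrMr //.
  have -> : d / 8 * k%:R = (k%:R * d) / 8 by ring.
  lra.
set t := part_scale R n (phi n s).
have Hcond : eps n <= 1 - t 0%N.
  have [_ [H|H]] := phi_close s 0%N Hn; first by apply: le_trans He1 _; rewrite /t; lra.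
  apply: le_trans He2 _.
  have : n%:R^-1 <= 2^-1 :> R by rewrite lef_pV2 ?posrE ?ltr0n // ler_nat.
  rewrite /t; lra.
rewrite Hcond.
have Hl1 := l1_bound Hn HN.
have Hlt : (l1dist (sdval s) t < d%:E)%E.
  apply: le_lt_trans Hl1 _; rewrite lte_fin; lra.
have := Hd t (phi_Sdown s Hn) Hlt.
rewrite -mulrBr normrM (ger0_norm (ltW w0)) => H.
apply: le_lt_trans H; rewrite ler_piMl // ?normr_ge0 //.
have := sd_ge0 s 0%N; lra.
Unshelve. all: by end_near.
Qed.

End M.

Section Final.
Variable R : realType.
Variable gamma : R.
Hypothesis g0 : 0 < gamma.
Variable nu : {measure set (SdownB R) -> \bar R}.
Hypothesis hint : (\int[nu]_s (1 - sdval s 0%N)%:E < +oo)%E.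

Definition pw n := n%:R `^ gamma.
Definition p n := (pw n)^-1.
Definition eps n := Num.sqrt (p n).

Lemma pw_gt0 n : (0 < n)%N -> 0 < pw n.
Proof. by move=> Hn; rewrite /pw powR_gt0 // ltr0n. Qed.

Lemma p_gt0 n : (0 < n)%N -> 0 < p n.
Proof. by move=> Hn; rewrite /p invr_gt0 pw_gt0. Qed.

Lemma eps_gt0 n : (0 < n)%N -> 0 < eps n.
Proof. by move=> Hn; rewrite /eps sqrtr_gt0 p_gt0. Qed.

Lemma pw_p n : (0 < n)%N -> pw n * p n = 1.
Proof. by move=> Hn; rewrite /p mulfV // gt_eqF // pw_gt0. Qed.

Lemma p_small a : 0 < a -> \forall n \near \oo, p n <= a.
Proof.
move=> a0; exists (Num.truncn (a^-1 `^ gamma^-1)).+1 => // n /= Hn.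
have Hn0 : (0 < n)%N by apply: leq_trans Hn.
rewrite /p -[X in _ <= X]invrK lef_pV2 ?posrE ?invr_gt0 ?pw_gt0 //.
have H1 : a^-1 `^ gamma^-1 < n%:R.
  by apply: lt_le_trans (truncnS_gt _) _; rewrite ler_nat.
have H2 : (a^-1 `^ gamma^-1) `^ gamma < n%:R `^ gamma.
  by apply: gt0_ltr_powR => //; rewrite ?posrE ?nnegrE ?powR_ge0 ?ler0n.
rewrite -powRrM mulVf ?gt_eqF // powRr1 in H2; last by rewrite invr_ge0 ltW.
exact: ltW.
Qed.

Lemma eps_small a : 0 < a -> \forall n \near \oo, eps n <= a.
Proof.
move=> a0; have := p_small (mulr_gt0 a0 a0); apply: filterS => n Hn.
have H0 : 0 <= p n.
  by rewrite /p invr_ge0 /pw powR_ge0.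
have := sqr_sqrtr H0; have := sqrtr_ge0 (p n); rewrite /eps expr2 => ? ?; nra.
Qed.


Definition K n l := if eps n <= 1 - part_scale R n l 0%N then (1 - part_scale R n l 0%N)^-1 else 0.
Definition main n l := p n * (K n l * W nu n l).
Definition e n := p n / n%:R.
Definition Mtot n := \sum_(l <- Lp n) main n l.
Definition good n := (2 <= n)%N && (Mtot n + e n < 1).
Definition ones n := nseq n 1%N.
Definition alt n := if (2 <= n)%N then ones n else [::].
Definition qq n l : R := if `[< partitions n l >] then
  (if good n then main n l + (ones n == l)%:R * e n + ([:: n] == l)%:R * (1 - Mtot n - e n)
   else (alt n == l)%:R * 1) else 0.

Lemma W_ge0 n l : 0 <= W nu n l.
Proof.
apply: fine_ge0; apply: integral_ge0 => s _; rewrite lee_fin mulr_ge0 ?w_ge0 //.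
Qed.

Lemma K_ge0 n l : (0 < n)%N -> 0 <= K n l.
Proof.
move=> Hn; rewrite /K; case: ifP => // H; rewrite invr_ge0.
exact: le_trans (ltW (eps_gt0 Hn)) H.
Qed.

Lemma K_le n l : (0 < n)%N -> K n l <= (eps n)^-1.
Proof.
move=> Hn; have He := eps_gt0 Hn; rewrite /K; case: ifP => H; last by rewrite invr_ge0 ltW.
by rewrite lef_pV2 ?posrE // (lt_le_trans He H).
Qed.

Lemma main_ge0 n l : (0 < n)%N -> 0 <= main n l.
Proof. by move=> Hn; rewrite /main mulr_ge0 ?mulr_ge0 ?K_ge0 ?W_ge0 // ltW // p_gt0. Qed.

Lemma e_gt0 n : (0 < n)%N -> 0 < e n.
Proof. by move=> Hn; rewrite /e divr_gt0 ?p_gt0 ?ltr0n. Qed.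

Lemma Mtot_ge0 n : (0 < n)%N -> 0 <= Mtot n.
Proof. by move=> Hn; apply: sumr_ge0 => l _; exact: main_ge0. Qed.

Lemma fsbig_Lp n (F : seq nat -> R) : \sum_(l \in partitions n) F l = \sum_(l <- Lp n) F l.
Proof. by rewrite fsbig_finite //; exact: part_finite. Qed.

Lemma ones_part n : (1 <= n)%N -> partitions n (ones n).
Proof.
move=> Hn; left; rewrite /ones; apply/andP; split; [apply/andP; split|].
- by case: n Hn => // n _ /=; rewrite path_nseq1.
- by apply/allP => x /nseqP[->].
- by elim: (n) => //= k /eqP ->; rewrite add1n.
Qed.

Lemma single_part n : (1 <= n)%N -> partitions n [:: n].
Proof. by move=> Hn; left => /=; rewrite Hn addn0 eqxx. Qed.

Lemma alt_part n : (1 <= n)%N -> partitions n (alt n).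
Proof.
move=> Hn; rewrite /alt; case: ifP => H; first exact: ones_part.
by right; split => //; apply/eqP; rewrite eqn_leq Hn andbT leqNgt H.
Qed.

Lemma inLp n l : (1 <= n)%N -> partitions n l -> l \in Lp n.
Proof. by move=> Hn H; rewrite Lp_mem; apply/asboolP. Qed.

Lemma main_single n : (0 < n)%N -> main n [:: n] = 0.
Proof.
move=> Hn; rewrite /main /K /part_scale /= mulfV ?gt_eqF ?ltr0n // subrr.
by rewrite leNgt eps_gt0 //= mul0r mulr0.
Qed.

Lemma qq_props n : (1 <= n)%N ->
  [/\ forall l, 0 <= qq n l,
      forall l, ~ partitions n l -> qq n l = 0,
      \sum_(l \in partitions n) qq n l = 1
    & qq n [:: n] < 1].
Proof.
move=> Hn; have He := e_gt0 Hn; have HM := Mtot_ge0 Hn.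
split.
- move=> l; rewrite /qq; case: asboolP => // Hl; case: ifP => [/andP[H2 Hg]|_].
    apply: addr_ge0; first apply: addr_ge0; first exact: main_ge0.
      by rewrite mulr_ge0 // ltW.
    by rewrite mulr_ge0 //; lra.
  by rewrite mulr_ge0.
- by move=> l Hl; rewrite /qq; case: asboolP.
- rewrite fsbig_Lp.
  transitivity (\sum_(l <- Lp n) (if good n then main n l + (ones n == l)%:R * e n +
     ([:: n] == l)%:R * (1 - Mtot n - e n) else (alt n == l)%:R * 1)).
    by apply: eq_big_seq => l; rewrite Lp_mem => /asboolP Hl; rewrite /qq asboolT.
  case: (good n).
    rewrite !big_split /= (sum_pick (fun=> e n) (inLp Hn (ones_part Hn)) (Lp_uniq n)).
    rewrite (sum_pick (fun=> (1 - Mtot n - e n)) (inLp Hn (single_part Hn)) (Lp_uniq n)).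
    rewrite -/(Mtot n); ring.
  by rewrite (sum_pick (fun=> 1) (inLp Hn (alt_part Hn)) (Lp_uniq n)).
- rewrite /qq asboolT; last exact: single_part.
  case: ifP => [/andP[H2 _]|_].
    rewrite main_single // eqxx.
    have -> : (ones n == [:: n]) = false.
      by apply/negbTE; apply/eqP => /(congr1 size); rewrite size_nseq /=; move=> E; move: H2; rewrite E.
    rewrite mul0r add0r mul1r; lra.
  have -> : (alt n == [:: n]) = false.
    rewrite /alt; case: ifP => // H2; apply/negbTE; apply/eqP => /(congr1 size).
    by rewrite size_nseq /=; move=> E; move: H2; rewrite E.
  by rewrite mul0r ltr01.
Qed.

Definition C := fine (\int[nu]_s (1 - sdval s 0%N)%:E)%E.

Lemma C_E : C%:E = (\int[nu]_s (1 - sdval s 0%N)%:E)%E.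
Proof. by rewrite /C fineK //; exact: integrable_fin_num (w_int hint). Qed.

Lemma C_ge0 : 0 <= C.
Proof. by rewrite /C fine_ge0 // integral_ge0 // => s _; rewrite lee_fin w_ge0. Qed.

Lemma p_eps n : (0 < n)%N -> p n = eps n * eps n.
Proof. by move=> Hn; rewrite /eps -expr2 sqr_sqrtr // ltW // p_gt0. Qed.

Lemma Mtot_le n : (1 <= n)%N -> Mtot n <= eps n * C.
Proof.
move=> Hn; have Hp := p_gt0 Hn; have Hep := eps_gt0 Hn.
have -> : Mtot n = p n * \sum_(l <- Lp n) K n l * W nu n l by rewrite /Mtot mulr_sumr.
have H : \sum_(l <- Lp n) K n l * W nu n l <= (eps n)^-1 * C.
  rewrite -lee_fin (KEY hint (K n) Hn) EFinM C_E -integralZl //; last exact: w_int.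
  apply: ge0_le_integral => //.
  - by move=> s _; rewrite lee_fin mulr_ge0 ?w_ge0 ?K_ge0.
  - exact: wG_meas.
  - apply/measurable_EFinP; apply: measurable_funM; first exact: measurable_cst.
    apply/measurable_EFinP; apply: measurableT_comp => //; exact: w_meas.
  - move=> s _; rewrite -EFinM lee_fin mulrC ler_wpM2r ?w_ge0 //; exact: K_le.
rewrite (p_eps Hn) -mulrA ler_pM2l //.
by have := ler_wpM2l (ltW Hep) H; rewrite mulrA mulfV ?gt_eqF // mul1r.
Qed.

Lemma good_ev : \forall n \near \oo, good n.
Proof.
have HC := C_ge0.
have a0 : 0 < (2 * (C + 1))^-1 by rewrite invr_gt0; lra.
near=> n.
have Hn2 : (2 <= n)%N by near: n; exists 2%N.
have Hn : (1 <= n)%N by apply: leq_trans Hn2.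
have H1 : eps n <= (2 * (C + 1))^-1 by near: n; exact: eps_small.
have H2 : p n <= 4^-1 by near: n; apply: p_small; rewrite invr_gt0.
have H3 : e n <= p n.
  by rewrite /e ler_pdivrMr ?ltr0n // ler_peMr ?ler1n // ltW ?p_gt0.
have H4 : eps n * C <= (2 * (C + 1))^-1 * C by rewrite ler_wpM2r.
have H5 : (2 * (C + 1))^-1 * C <= 2^-1.
  rewrite mulrC ler_pdivrMr; last lra.
  lra.
have H6 := Mtot_le Hn.
rewrite /good Hn2 /=; lra.
Unshelve. all: by end_near.
Qed.

Lemma ps_phi_Sdown n (s : Sdown R) : is_Sdown (part_scale R n (phi n s)).
Proof.
case: n => [|n]; last exact: phi_Sdown.
have -> : part_scale R 0 (phi 0 s) = fun _ => 0.
  by apply: funext => i; rewrite /part_scale invr0 mulr0.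
exact: is_Sdown0.
Qed.

Definition Gf (f : (nat -> R) -> R) n l :=
  if eps n <= 1 - part_scale R n l 0%N then f (part_scale R n l) else 0.
Definition Bf (f : (nat -> R) -> R) n :=
  n%:R^-1 * ((1 - part_scale R n (ones n) 0%N) * f (part_scale R n (ones n))).

Lemma KX f n l : (0 < n)%N ->
  K n l * ((1 - part_scale R n l 0%N) * f (part_scale R n l)) = Gf f n l.
Proof.
move=> Hn; rewrite /K /Gf; case: ifP => H; last by rewrite mul0r.
by rewrite mulrA mulVf ?mul1r // gt_eqF // (lt_le_trans (eps_gt0 Hn) H).
Qed.

Lemma sum_eq f n : good n ->
  pw n * \sum_(l <- Lp n) qq n l * (1 - part_scale R n l 0%N) * f (part_scale R n l) =
  \sum_(l <- Lp n) Gf f n l * W nu n l + Bf f n.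
Proof.
move=> Hg; have /andP[H2 _] := Hg; have Hn : (1 <= n)%N by apply: leq_trans H2.
set X := fun l => (1 - part_scale R n l 0%N) * f (part_scale R n l).
transitivity (pw n * \sum_(l <- Lp n) (main n l * X l + (ones n == l)%:R * (e n * X l)
    + ([:: n] == l)%:R * ((1 - Mtot n - e n) * X l))).
  congr (_ * _); apply: eq_big_seq => l; rewrite Lp_mem => /asboolP Hl.
  rewrite /qq asboolT // Hg /X; ring.
rewrite !big_split /= (sum_pick (fun l => e n * X l) (inLp Hn (ones_part Hn)) (Lp_uniq n)).
rewrite (sum_pick (fun l => (1 - Mtot n - e n) * X l) (inLp Hn (single_part Hn)) (Lp_uniq n)).
have -> : X [:: n] = 0 by rewrite /X /part_scale /= mulfV ?gt_eqF ?ltr0n // subrr mul0r.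
rewrite mulr0 addr0 mulrDr; congr (_ + _).
  rewrite /main; under eq_bigr do rewrite -!mulrA.
  rewrite -mulr_sumr mulrA pw_p // mul1r; apply: eq_bigr => l _.
  by rewrite -(KX f l Hn) /X; ring.
by rewrite /Bf /e /X !mulrA pw_p // mul1r.
Qed.

Lemma part_Sdown n l : (1 <= n)%N -> partitions n l -> is_Sdown (part_scale R n l).
Proof.
move=> Hn [/andP[/andP[Hs _] /eqP Hsum]|[_ ->]].
  by apply: ps_Sdown => //; rewrite Hsum.
by apply: ps_Sdown.
Qed.

Lemma Bf_cvg f : bdd_cont_Sdown f -> (fun n => (Bf f n)%:E) @ \oo --> 0%E.
Proof.
move=> [[Mf HM] _]; apply/fine_cvgP; split; first exact: nearW.
apply/cvgrPdist_lt => a a0; near=> n.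
have Hn : (1 <= n)%N by near: n; exists 1%N.
have Hn' : 0 < n%:R :> R by rewrite ltr0n.
have Hna : `|Mf| / n%:R < a.
  near: n; exists (Num.truncn (`|Mf| / a)).+1 => // k /= Hk.
  have Hk' : 0 < k%:R :> R by rewrite ltr0n (leq_trans _ Hk).
  have Hk2 : `|Mf| / a < k%:R by apply: lt_le_trans (truncnS_gt _) _; rewrite ler_nat.
  rewrite ltr_pdivrMr // in Hk2.
  by rewrite ltr_pdivrMr // mulrC.
rewrite /= sub0r normrN; apply: le_lt_trans Hna.
rewrite /Bf normrM ger0_norm ?invr_ge0 ?ler0n // mulrC ler_wpM2r ?invr_ge0 ?ler0n //.
rewrite normrM.
have Ht := part_Sdown Hn (ones_part Hn).
have H1 : `|f (part_scale R n (ones n))| <= `|Mf|.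
  exact: le_trans (HM _ Ht) (ler_norm _).
have H2 : `|1 - part_scale R n (ones n) 0%N| <= 1.
  have : part_scale R n (ones n) 0%N = n%:R^-1.
    by rewrite /part_scale /ones; case: (n) Hn => //= k _; rewrite mul1r.
  move=> ->; have h1 : 0 <= n%:R^-1 :> R by rewrite invr_ge0.
  have h2 : n%:R^-1 <= 1 :> R by rewrite invf_le1 // ler1n.
  rewrite ger0_norm; lra.
rewrite -[X in _ <= X]mul1r; apply: ler_pM => //.
Unshelve. all: by end_near.
Qed.

Lemma conv f (Hf : bdd_cont_Sdown f)
  (Hnull : nu [set s : SdownB R | (\sum_(i <oo) (sdval s i)%:E < 1%:E)%E] = 0%E) :
  (fun n => (pw n * \sum_(l \in partitions n)
     (qq n l * (1 - part_scale R n l 0%N) * f (part_scale R n l)))%:E) @ \oo -->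
  (\int[nu]_s ((1 - sdval s 0%N) * f (sdval s))%:E)%E.
Proof.
have [[Mf HM] Hcont] := Hf.
have flip : lip_open (fun s : SdownB R => f (sdval s)).
  move=> x a a0; have [d d0 Hd] := Hcont _ (sdvalP x) a a0; exists d => // y; exact: Hd (sdvalP y).
have mf : measurable_fun setT (fun s : SdownB R => ((1 - sdval s 0%N) * f (sdval s))%:E).
  apply/measurable_EFinP; apply: measurable_funM; [exact: w_meas | exact: lip_meas flip].
have ig : nu.-integrable setT (fun s : SdownB R => (`|Mf| * (1 - sdval s 0%N))%:E).
  by have := integrableZl measurableT `|Mf| (w_int hint).
have f_g : {ae nu, forall s n, setT s ->
    (`|((1 - sdval s 0%N) * Gf f n (phi n s))%:E| <= (`|Mf| * (1 - sdval s 0%N))%:E)%E}.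
  apply: aeW => s n _; rewrite abse_EFin lee_fin normrM ger0_norm ?w_ge0 // mulrC ler_wpM2r ?w_ge0 //.
  rewrite /Gf; case: ifP => _; last by rewrite normr0.
  exact: le_trans (HM _ (ps_phi_Sdown n s)) (ler_norm _).
have f_f : {ae nu, forall s, setT s ->
    (fun n => ((1 - sdval s 0%N) * Gf f n (phi n s))%:E) @ \oo --> ((1 - sdval s 0%N) * f (sdval s))%:E}.
  exists [set s : SdownB R | (\sum_(i <oo) (sdval s i)%:E < 1%:E)%E]; split.
  - exact: open_meas (@sum_lt1_open R).
  - exact: Hnull.
  move=> s /= Hns; apply: contrapT => Hs; apply: Hns => _.
  apply/fine_cvgP; split; first exact: nearW.
  exact: (pw_conv Hf eps_small Hs).
have [Hint _ DC] := dominated_convergence measurableT (fun n => wG_meas n (Gf f n)) mf f_f ig f_g.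
have HB := Bf_cvg Hf.
have Hfin := integrable_fin_num measurableT Hint.
have := cvgeD (fin_num_adde_defr _ Hfin) DC HB.
rewrite adde0 => Hsum.
apply: (cvg_trans _ (Hsum _)); apply: near_eq_cvg.
near=> n.
have Hg : good n by near: n; exact: good_ev.
have /andP[H2 _] := Hg; have Hn : (1 <= n)%N by apply: leq_trans H2.
by rewrite /= fsbig_Lp (sum_eq f Hg) EFinD (KEY hint (Gf f n) Hn).
Unshelve. all: by end_near.
Qed.

End Final.

Unset Implicit Arguments.

Theorem proposition4 (R : realType) (gamma : R) (nu : {measure set (SdownB R) -> \bar R}) :
  0 < gamma -> dislocation_measure nu ->
  exists q : nat -> seq nat -> R,
    (forall n : nat, (1 <= n)%N ->
       [/\ forall l, 0 <= q n l,
           forall l, ~ partitions n l -> q n l = 0,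
           \sum_(l \in partitions n) q n l = 1
         & q n [:: n] < 1]) /\
    (forall f : (nat -> R) -> R, bdd_cont_Sdown f ->
       ((fun n : nat => ((n%:R `^ gamma) *
            \sum_(l \in partitions n)
               (q n l * (1 - part_scale R n l 0%N) * f (part_scale R n l)))%:E)
         @ \oo --> \int[nu]_s ((1 - sdval s 0%N) * f (sdval s))%:E)%E).
Proof.
move=> g0 [_ _ Hnull hint].
exists (qq gamma nu); split.
  by move=> n Hn; exact: (qq_props gamma nu Hn).
by move=> f Hf; exact: (conv g0 hint Hf Hnull).
Qed.
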